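(* For all $k\ge0$, $$\|\mathbf H^{k+1}-\tilde{\mathbf H}^{k+1}\|_F\le\big(1-\delta+2\gamma(1-\delta)\big)\|\mathbf H^k-\tilde{\mathbf H}^k\|_F+4\gamma\|\mathbf E^k\|_F+2\gamma\|\mathbf H^k-\mathbf W^\infty\mathbf H^k\|_F+L_2\|\mathbf x^{k+1}-\mathbf x^k\|.$$
   Context: $W\in\mathbb{R}^{n\times n}$ is entrywise nonnegative, symmetric, $W1_n=1_n$, with $w_{ij}=0$ iff $j$ is neither $i$ nor a neighbor of $i$ in an undirected connected graph. Each $f_i:\mathbb{R}^d\to\mathbb{R}$ is $C^2$ with $L_1$-Lipschitz gradient and $L_2$-Lipschitz Hessian. $\mathcal Q:\mathbb{R}^{d\times d}\to\mathbb{R}^{d\times d}$ is deterministic with $\|\mathcal Q(A)-A\|_F\le(1-\delta)\|A\|_F$, $\delta\in(0,1]$, applied blockwise to $nd\times d$ matrices. Notation: $\mathbf x=[x_1;\dots;x_n]\in\mathbb{R}^{nd}$; $\mathbf W=W\otimes I_d$, $\mathbf W^\infty=\frac1n1_n1_n^T\otimes I_d$; $\nabla^2f(\mathbf x)=[\nabla^2f_1(x_1);\dots;\nabla^2f_n(x_n)]\in\mathbb{R}^{nd\times d}$. With $\gamma>0$, arbitrary points $\mathbf x^k\in\mathbb{R}^{nd}$, and arbitrary $\mathbf E^0,\tilde{\mathbf H}^0$, $H_i^0=\nabla^2f_i(x_i^0)$, the sequences satisfy for $k\ge0$: $\mathbf E^{k+1}=\mathbf E^k+\mathbf H^k-\tilde{\mathbf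 H}^k-\mathcal Q(\mathbf E^k+\mathbf H^k-\tilde{\mathbf H}^k)$; $\tilde{\mathbf H}^{k+1}=\tilde{\mathbf H}^k+\mathcal Q(\mathbf H^k-\tilde{\mathbf H}^k)$; $\hat{\mathbf H}^k=\tilde{\mathbf H}^k+\mathcal Q(\mathbf E^k+\mathbf H^k-\tilde{\mathbf H}^k)$; $\mathbf H^{k+1}=\mathbf H^k-\gamma(I_{nd}-\mathbf W)\hat{\mathbf H}^k+\nabla^2f(\mathbf x^{k+1})-\nabla^2f(\mathbf x^k)$. *)

(* Defs.v *)
From HB Require Import structures.
From mathcomp Require Import all_boot all_order all_algebra.
From mathcomp Require Import all_classical all_reals all_analysis.
Set Implicit Arguments. Unset Strict Implicit. Unset Printing Implicit Defensive.
Import Order.TTheory GRing.Theory Num.Theory.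
Import numFieldNormedType.Exports.
Local Open Scope ring_scope.

Section Defs.
Variable R : realType.

Definition frob (p q : nat) (A : 'M[R]_(p, q)) : R :=
  Num.sqrt (\sum_(a < p) \sum_(b < q) (A a b) ^+ 2).

(* Frobenius norm of a block-column matrix [B_1; ...; B_n] (stacked blocks);
   for 1 x d blocks this is the Euclidean norm of the stacked vector. *)
Definition frobB (n p q : nat) (B : 'I_n -> 'M[R]_(p, q)) : R :=
  Num.sqrt (\sum_(i < n) \sum_(a < p) \sum_(b < q) (B i a b) ^+ 2).

Definition ev (d : nat) (j : 'I_d) : 'rV[R]_d := delta_mx 0 j.

Definition partial (d : nat) (f : 'rV[R]_d -> R) (j : 'I_d) (x : 'rV[R]_d) : R :=
  'D_(ev j) f x.

Definition gradient (d : nat) (f : 'rV[R]_d -> R) (x : 'rV[R]_d) : 'rV[R]_d :=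
  \row_j partial f j x.

Definition hessian (d : nat) (f : 'rV[R]_d -> R) (x : 'rV[R]_d) : 'M[R]_d :=
  \matrix_(i, j) 'D_(ev j) (partial f i) x.

Definition C2 (d : nat) (f : 'rV[R]_d -> R) : Prop :=
  (forall x, differentiable f x) /\
  (forall i x, differentiable (partial f i) x) /\
  (forall i j, continuous (fun x => hessian f x i j)).

(* [(I - W) (x) I_d] applied to a block-column matrix *)
Definition IminusW_apply (n d : nat) (W : 'M[R]_n) (B : 'I_n -> 'M[R]_d)
  : 'I_n -> 'M[R]_d :=
  fun i => \sum_(j < n) (((i == j)%:R - W i j) *: B j).

(* [W^infty] applied: every block is the average of the blocks *)
Definition Winf_apply (n d : nat) (B : 'I_n -> 'M[R]_d) : 'I_n -> 'M[R]_d :=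
  fun _ => n%:R^-1 *: \sum_(j < n) B j.

End Defs.

(* Main.v *)
Require Import Defs.
From HB Require Import structures.
From mathcomp Require Import all_boot all_order all_algebra.
From mathcomp Require Import all_classical all_reals all_analysis.
Import Order.TTheory GRing.Theory Num.Theory.
Import numFieldNormedType.Exports.
From mathcomp Require Import ring lra.
Local Open Scope ring_scope.
Set Implicit Arguments. Unset Strict Implicit.
Section L2.
Variable R : realType.

Definition ss (I : finType) (u : I -> R) := \sum_i u i ^+ 2.

Lemma ss_ge0 (I : finType) (u : I -> R) : 0 <= ss u.
Proof. by apply: sumr_ge0 => i _; rewrite sqr_ge0. Qed.

Lemma cs (I : finType) (u v : I -> R) :
  (\sum_i u i * v i) ^+ 2 <= ss u * ss v.
Proof.
set A := ss u; set B := ss v; set C := \sum_i u i * v i.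
have [B0|Bpos] := eqVneq B 0.
  have v0 : forall i, v i = 0.
    move=> i; move/eqP: B0; rewrite /B /ss psumr_eq0; last by move=> j _; rewrite sqr_ge0.
    move/allP => /(_ i (mem_index_enum i)) /= /eqP.
    by move/eqP; rewrite sqrf_eq0 => /eqP.
  have -> : C = 0 by rewrite /C big1 // => i _; rewrite v0 mulr0.
  by rewrite B0 expr0n /= mulr0.
have Bgt : 0 < B by rewrite lt_def Bpos ss_ge0.
have e : \sum_i (u i * B - C * v i) ^+ 2 = B * (A * B - C ^+ 2).
  transitivity (\sum_i (B ^+ 2 * u i ^+ 2 - (2 * B * C) * (u i * v i) + C ^+ 2 * v i ^+ 2)).
    by apply: eq_bigr => i _; ring.
  rewrite big_split /= sumrB -!mulr_sumr -/C.
  idtac.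
rewrite -[\sum_i u i ^+ 2]/A -[\sum_i v i ^+ 2]/B.
clearbody A B C; ring.
have : 0 <= B * (A * B - C ^+ 2) by rewrite -e; apply: sumr_ge0 => i _; rewrite sqr_ge0.
by rewrite pmulr_rge0 // subr_ge0.
Qed.

Lemma ss_add_le (I : finType) (u v : I -> R) :
  Num.sqrt (ss (fun i => u i + v i)) <= Num.sqrt (ss u) + Num.sqrt (ss v).
Proof.
set A := ss u; set B := ss v; set C := \sum_i u i * v i.
have eq1 : ss (fun i => u i + v i) = A + 2 * C + B.
  transitivity (\sum_i (u i ^+ 2 + 2 * (u i * v i) + v i ^+ 2)).
    by apply: eq_bigr => i _; ring.
  by rewrite !big_split /= -mulr_sumr.
have hC : C <= Num.sqrt A * Num.sqrt B.
  rewrite -sqrtrM ?ss_ge0 //; apply: (le_trans (ler_norm C)).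
  by rewrite -sqrtr_sqr ler_sqrt ?mulr_ge0 ?ss_ge0 // cs.
have hA := sqr_sqrtr (ss_ge0 u); have hB := sqr_sqrtr (ss_ge0 v).
rewrite -[X in _ <= X]ger0_norm ?addr_ge0 ?sqrtr_ge0 // -sqrtr_sqr.
rewrite ler_sqrt ?sqr_ge0 // eq1.
rewrite -/A -/B in hA hB.
have -> : (Num.sqrt A + Num.sqrt B) ^+ 2 = Num.sqrt A ^+ 2 + 2 * (Num.sqrt A * Num.sqrt B) + Num.sqrt B ^+ 2 by ring.
rewrite hA hB; lra.
Qed.

Lemma ss_le (I : finType) (u v : I -> R) :
  (forall i, u i ^+ 2 <= v i ^+ 2) -> Num.sqrt (ss u) <= Num.sqrt (ss v).
Proof. by move=> h; rewrite ler_sqrt ?ss_ge0 //; apply: ler_sum => i _. Qed.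

Lemma ss_scale (I : finType) (c : R) (u : I -> R) :
  Num.sqrt (ss (fun i => c * u i)) = `|c| * Num.sqrt (ss u).
Proof.
rewrite /ss; under eq_bigr do rewrite exprMn.
by rewrite -mulr_sumr sqrtrM ?sqr_ge0 // sqrtr_sqr.
Qed.

Lemma ss_block (I : finType) (a b : I -> R) (c : R) :
  (forall i, 0 <= a i) -> (forall i, 0 <= b i) -> (forall i, b i <= c * a i) ->
  Num.sqrt (ss b) <= c * Num.sqrt (ss a).
Proof.
move=> ha hb hba.
have [c0|c0] := leP 0 c.
  rewrite -(ger0_norm c0) -ss_scale; apply: ss_le => i.
  rewrite ler_sqr ?nnegrE ?hb ?mulr_ge0 ?normr_ge0 ?ha // ger0_norm //.
have z : forall i, b i = 0 /\ a i = 0.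
  move=> i; have := hba i; have := ha i; have := hb i.
  move=> h1 h2 h3; nra.
have -> : ss b = 0 by rewrite /ss big1 // => i _; rewrite (z i).1 expr0n.
have -> : ss a = 0 by rewrite /ss big1 // => i _; rewrite (z i).2 expr0n.
by rewrite sqrtr0 mulr0.
Qed.

Lemma jensen (I : finType) (w y : I -> R) :
  (forall i, 0 <= w i) -> \sum_i w i = 1 ->
  (\sum_i w i * y i) ^+ 2 <= \sum_i w i * y i ^+ 2.
Proof.
move=> hw h1; set m := \sum_i w i * y i.
have e : \sum_i w i * (y i - m) ^+ 2 = \sum_i w i * y i ^+ 2 - m ^+ 2.
  transitivity (\sum_i (w i * y i ^+ 2 - (2 * m) * (w i * y i) + m ^+ 2 * w i)).
    by apply: eq_bigr => i _; ring.
  rewrite big_split /= sumrB -!mulr_sumr -/m h1; ring.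
have : 0 <= \sum_i w i * (y i - m) ^+ 2.
  by apply: sumr_ge0 => i _; rewrite mulr_ge0 ?sqr_ge0.
rewrite e subr_ge0 //.
Qed.



Lemma frobBE (n p q : nat) (B : 'I_n -> 'M[R]_(p, q)) :
  frobB B = Num.sqrt (ss (fun z : 'I_n * ('I_p * 'I_q) => B z.1 z.2.1 z.2.2)).
Proof.
rewrite /frobB /ss; congr Num.sqrt.
under eq_bigr do rewrite pair_bigA.
by rewrite pair_bigA.
Qed.

Lemma frobB_blocks (n p q : nat) (B : 'I_n -> 'M[R]_(p, q)) :
  frobB B = Num.sqrt (ss (fun i => frob (B i))).
Proof.
rewrite /frobB /ss /frob; congr Num.sqrt; apply: eq_bigr => i _.
by rewrite sqr_sqrtr //; apply: sumr_ge0 => a _; apply: sumr_ge0 => b _; rewrite sqr_ge0.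
Qed.

Lemma frobB_ge0 (n p q : nat) (B : 'I_n -> 'M[R]_(p, q)) : 0 <= frobB B.
Proof. exact: sqrtr_ge0. Qed.

Lemma frob_ge0 (p q : nat) (B : 'M[R]_(p, q)) : 0 <= frob B.
Proof. exact: sqrtr_ge0. Qed.

Lemma frobB_ext (n p q : nat) (B C : 'I_n -> 'M[R]_(p, q)) :
  (forall i, B i = C i) -> frobB B = frobB C.
Proof. by move=> h; congr frobB; apply: funext. Qed.

Lemma frobB_add (n p q : nat) (B C : 'I_n -> 'M[R]_(p, q)) :
  frobB (fun i => B i + C i) <= frobB B + frobB C.
Proof.
rewrite !frobBE.
have -> : ss (fun z : 'I_n * ('I_p * 'I_q) => (B z.1 + C z.1) z.2.1 z.2.2) =
  ss (fun z : 'I_n * ('I_p * 'I_q) => B z.1 z.2.1 z.2.2 + C z.1 z.2.1 z.2.2).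
  by apply: eq_bigr => z _; rewrite mxE.
exact: ss_add_le.
Qed.

Lemma frobB_scale (n p q : nat) (c : R) (B : 'I_n -> 'M[R]_(p, q)) :
  frobB (fun i => c *: B i) = `|c| * frobB B.
Proof.
rewrite !frobBE -ss_scale; congr Num.sqrt; apply: eq_bigr => z _; by rewrite mxE.
Qed.

Lemma frobB_opp (n p q : nat) (B : 'I_n -> 'M[R]_(p, q)) :
  frobB (fun i => - B i) = frobB B.
Proof.
rewrite -[RHS]mul1r -(normr1 R) -(normrN (1 : R)) -frobB_scale.
by apply: frobB_ext => i; rewrite scaleN1r.
Qed.

Lemma frobB_sub (n p q : nat) (B C : 'I_n -> 'M[R]_(p, q)) :
  frobB (fun i => B i - C i) <= frobB B + frobB C.
Proof. by rewrite -[frobB C]frobB_opp; apply: frobB_add. Qed.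

Lemma frobB_blockwise (n p q p' q' : nat) (B : 'I_n -> 'M[R]_(p, q))
  (C : 'I_n -> 'M[R]_(p', q')) (c : R) :
  (forall i, frob (B i) <= c * frob (C i)) -> frobB B <= c * frobB C.
Proof.
move=> h; rewrite !frobB_blocks; apply: ss_block => // i; exact: frob_ge0.
Qed.

Lemma frobB_W (n p q : nat) (W : 'M[R]_n) (B : 'I_n -> 'M[R]_(p, q)) :
  (forall i j, 0 <= W i j) -> W^T = W -> (forall i, \sum_(j < n) W i j = 1) ->
  frobB (fun i => \sum_j W i j *: B j) <= frobB B.
Proof.
move=> hnn hsym hst.
have hcol : forall j, \sum_(i < n) W i j = 1.
  move=> j; rewrite -(hst j); apply: eq_bigr => i _.
  by rewrite -{1}hsym mxE.
rewrite /frobB ler_sqrt; last first.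
  by apply: sumr_ge0 => i _; apply: sumr_ge0 => a _; apply: sumr_ge0 => b _; rewrite sqr_ge0.
apply: (@le_trans _ _ (\sum_(i < n) \sum_(a < p) \sum_(b < q) \sum_(j < n) W i j * (B j a b) ^+ 2)).
  apply: ler_sum => i _; apply: ler_sum => a _; apply: ler_sum => b _.
  rewrite summxE; under eq_bigr do rewrite mxE.
  exact: jensen.
under eq_bigr => i _ do under eq_bigr => a _ do rewrite exchange_big.
under eq_bigr => i _ do rewrite exchange_big.
rewrite exchange_big /= le_eqVlt; apply/orP; left; apply/eqP.
apply: eq_bigr => j _.
under eq_bigr => i _ do under eq_bigr => a _ do rewrite -mulr_sumr.
under eq_bigr => i _ do rewrite -mulr_sumr.
by rewrite -mulr_suml hcol mul1r.
Qed.

Lemma frobB_IW (n p q : nat) (W : 'M[R]_n) (B : 'I_n -> 'M[R]_(p, q)) :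
  (forall i j, 0 <= W i j) -> W^T = W -> (forall i, \sum_(j < n) W i j = 1) ->
  frobB (fun i => B i - \sum_j W i j *: B j) <= 2 * frobB B.
Proof.
move=> h1 h2 h3; apply: (le_trans (frobB_sub _ _)).
have := frobB_W B h1 h2 h3; lra.
Qed.

End L2.

Lemma frobN (R : realType) (p q : nat) (M : 'M[R]_(p, q)) : frob (- M) = frob M.
Proof.
rewrite /frob; congr Num.sqrt; apply: eq_bigr => a _; apply: eq_bigr => b _.
by rewrite mxE sqrrN.
Qed.

Theorem lemma7 (R : realType) (n d : nat)
  (adj : rel 'I_n) (W : 'M[R]_n)
  (f : 'I_n -> 'rV[R]_d -> R) (L1 L2 : R)
  (Q : 'M[R]_d -> 'M[R]_d) (delta gamma : R)
  (x : nat -> 'I_n -> 'rV[R]_d)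
  (E Ht H : nat -> 'I_n -> 'M[R]_d)
  (* undirected connected graph *)
  (Hadj_sym : symmetric adj) (Hadj_irr : irreflexive adj)
  (Hconn : forall i j, connect adj i j)
  (* mixing matrix *)
  (HWnn : forall i j, 0 <= W i j)
  (HWsym : W^T = W)
  (HWstoch : forall i, \sum_(j < n) W i j = 1)
  (HWsupp : forall i j, W i j = 0 <-> (j != i /\ ~~ adj i j))
  (* local functions *)
  (Hf_C2 : forall i, C2 (f i))
  (Hgrad : forall i y z, frob (gradient (f i) y - gradient (f i) z) <= L1 * frob (y - z))
  (Hhess : forall i y z, frob (hessian (f i) y - hessian (f i) z) <= L2 * frob (y - z))
  (* compressor *)
  (Hdelta : 0 < delta <= 1)
  (HQ : forall A, frob (Q A - A) <= (1 - delta) * frob A)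
  (Hgamma : 0 < gamma)
  (* recursions *)
  (HH0 : forall i, H 0%N i = hessian (f i) (x 0%N i))
  (HE : forall k i, E k.+1 i = E k i + H k i - Ht k i - Q (E k i + H k i - Ht k i))
  (HHt : forall k i, Ht k.+1 i = Ht k i + Q (H k i - Ht k i))
  (HH : forall k i, H k.+1 i =
      H k i - gamma *: IminusW_apply W
                 (fun j => Ht k j + Q (E k j + H k j - Ht k j)) i
      + hessian (f i) (x k.+1 i) - hessian (f i) (x k i)) :
  forall k : nat,
    frobB (fun i => H k.+1 i - Ht k.+1 i)
    <= (1 - delta + 2 * gamma * (1 - delta)) * frobB (fun i => H k i - Ht k i)
       + 4 * gamma * frobB (E k)
       + 2 * gamma * frobB (fun i => H k i - Winf_apply (H k) i)
       + L2 * frobB (fun i => x k.+1 i - x k i).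
Proof.
move=> k.
set D := fun i => H k i - Ht k i.
set A := fun i => E k i + H k i - Ht k i.
set Hh := fun j => Ht k j + Q (A j).
set c := n%:R^-1 *: \sum_(j < n) H k j.
have hIW : forall i, IminusW_apply W Hh i = (Hh i - c) - \sum_j W i j *: (Hh j - c).
  move=> i; rewrite /IminusW_apply.
  under eq_bigr do rewrite scalerBl.
  rewrite sumrB.
  have e1 : \sum_(j < n) ((i == j)%:R *: Hh j) = Hh i.
    rewrite (bigD1 i) //= eqxx scale1r big1 ?addr0 // => j /negbTE.
    by rewrite eq_sym => ->; rewrite scale0r.
  rewrite e1.
  under [X in _ = _ - X]eq_bigr do rewrite scalerBr.
  rewrite sumrB -scaler_suml HWstoch scale1r.
  by apply/matrixP => a b; rewrite !mxE; ring.
have bIW : frobB (IminusW_apply W Hh) <= 2 * frobB (fun i => Hh i - c).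
  rewrite (frobB_ext hIW); exact: frobB_IW.
have eV : forall i, Hh i - c = (Hh i - H k i) + (H k i - Winf_apply (H k) i).
  by move=> i; rewrite /Winf_apply; apply/matrixP => a b; rewrite !mxE; ring.
have bV := frobB_add (fun i => Hh i - H k i) (fun i => H k i - Winf_apply (H k) i).
rewrite -(frobB_ext eV) in bV.
have eG : forall i, Hh i - H k i = (Q (A i) - A i) + E k i.
  by move=> i; apply/matrixP => a b; rewrite /Hh /A !mxE; ring.
have bG := frobB_add (fun i => Q (A i) - A i) (E k).
rewrite -(frobB_ext eG) in bG.
have bQA : frobB (fun i => Q (A i) - A i) <= (1 - delta) * frobB A.
  by apply: frobB_blockwise => i; apply: HQ.
have eA : forall i, A i = E k i + D i.
  by move=> i; apply/matrixP => a b; rewrite /A /D !mxE; ring.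
have bA := frobB_add (E k) D.
rewrite -(frobB_ext eA) in bA.
have bQD : frobB (fun i => D i - Q (D i)) <= (1 - delta) * frobB D.
  apply: frobB_blockwise => i.
  by rewrite -frobN opprB; apply: HQ.
have bHs : frobB (fun i => hessian (f i) (x k.+1 i) - hessian (f i) (x k i))
    <= L2 * frobB (fun i => x k.+1 i - x k i).
  by apply: frobB_blockwise => i; apply: Hhess.
have eN : forall i, H k.+1 i - Ht k.+1 i =
   ((D i - Q (D i)) + - (gamma *: IminusW_apply W Hh i))
   + (hessian (f i) (x k.+1 i) - hessian (f i) (x k i)).
  move=> i; rewrite HH HHt.
  by apply/matrixP => a b; rewrite /D /Hh /A !mxE; ring.
rewrite (frobB_ext eN).
apply: (le_trans (frobB_add _ _)).
have b1 := frobB_add (fun i => D i - Q (D i)) (fun i => - (gamma *: IminusW_apply W Hh i)).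
rewrite frobB_opp frobB_scale gtr0_norm // in b1.
have nD := frobB_ge0 D; have nE := frobB_ge0 (E k).
have nA := frobB_ge0 A.
have nV := frobB_ge0 (fun i => H k i - Winf_apply (H k) i).
have nIW := frobB_ge0 (IminusW_apply W Hh).
move: Hdelta => /andP [d0 d1].
set fD := frobB D in nD bQD bA b1 *.
set fE := frobB (E k) in nE bG bA *.
set fA := frobB A in nA bQA bA.
set fV := frobB (fun i => H k i - Winf_apply (H k) i) in nV bV *.
set fI := frobB (IminusW_apply W Hh) in nIW bIW b1.
set fQA := frobB (fun i => Q (A i) - A i) in bQA bG.
set fG := frobB (fun i => Hh i - H k i) in bG bV.
set fC := frobB (fun i => Hh i - c) in bIW bV.
set fX := frobB (fun i => x k.+1 i - x k i) in bHs *.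
set fH := frobB (fun i => hessian (f i) (x k.+1 i) - hessian (f i) (x k i)) in bHs *.
set fDQ := frobB (fun i => D i - Q (D i)) in bQD b1.
set fL := frobB _ in b1 *.
have h1 : fI <= 2 * (1 - delta) * fD + 4 * fE + 2 * fV.
  have : fQA <= (1 - delta) * (fE + fD) by apply: (le_trans bQA); apply: ler_wpM2l; lra.
  nra.
have h2 : gamma * fI <= gamma * (2 * (1 - delta) * fD + 4 * fE + 2 * fV).
  by apply: ler_wpM2l => //; apply: ltW.
nra.
Qed.
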